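(* Let $L$ be a finite-dimensional Lie algebra over a field $F$ and let $0\ne u\in L$ be such that $Fu$ is semi-modular in $L$ but not an ideal of $L$. Then one of the following holds: (i) $L$ is almost abelian; (ii) $\langle u,x\rangle$ is a $\mu$-algebra for every $x\in L\setminus Fu$; (iii) $F$ has characteristic two and there is an isomorphism $L\cong K$ carrying $Fu$ onto $Fc$.
   Context: $K$ denotes the three-dimensional Lie algebra with basis $a,b,c$ and products $[a,b]=c$, $[b,c]=b$, $[a,c]=a$. $\langle U,B\rangle$ denotes the generated subalgebra. A subalgebra $B$ covers a subalgebra $A$ if $A$ is a maximal subalgebra of $B$. $U$ is upper modular (um) in $L$ if whenever $B$ is a subalgebra of $L$ which covers $U\cap B$, then $\langle U,B\rangle$ covers $U$; $U$ is lower modular (lm) in $L$ if whenever $B$ is a subalgebra of $L$ such that $\langle U,B\rangle$ covers $U$, then $B$ covers $U\cap B$; $U$ is semi-modular (sm) in $L$ if it is both um and lm. A $\mu$-algebra is a non-solvable Lie algebra in which every proper subalgebra is one-dimensional. $L$ is almost abelian if $L=L^2\oplus Fx$ for some $x$, where $L^2=[L,L]$ is abelian and $\mathrm{ad}\,x$ acts as the identity map on $L^2$. *)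

(* Defs.v *)
From HB Require Import structures.
From mathcomp Require Import all_boot all_order all_algebra.
Set Implicit Arguments. Unset Strict Implicit. Unset Printing Implicit Defensive.
Import GRing.Theory.
Local Open Scope ring_scope.


Section Lie.
Variables (F : fieldType) (vT : vectType F) (br : vT -> vT -> vT).

Definition lie_bracket : Prop :=
  [/\ (forall (a : F) (x y z : vT), br (a *: x + y) z = a *: br x z + br y z),
      (forall (a : F) (x y z : vT), br x (a *: y + z) = a *: br x y + br x z),
      (forall x : vT, br x x = 0) &
      (forall x y z : vT, br x (br y z) + br y (br z x) + br z (br x y) = 0)].

Definition subalg (U : {vspace vT}) : Prop :=
  forall x y, x \in U -> y \in U -> br x y \in U.

Definition ideal (U : {vspace vT}) : Prop :=
  forall x y, y \in U -> br x y \in U.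

(* [U,V]: the span of all brackets [x,y], x in U, y in V (by bilinearity it is
   spanned by the brackets of basis vectors) *)
Definition brv (U V : {vspace vT}) : {vspace vT} :=
  <<[seq br x y | x <- vbasis U, y <- vbasis V]>>%VS.

Definition is_gen (W U B : {vspace vT}) : Prop :=
  [/\ subalg W, (U + B <= W)%VS &
      forall S, subalg S -> (U + B <= S)%VS -> (W <= S)%VS].

Definition covers (B A : {vspace vT}) : Prop :=
  [/\ subalg A, subalg B, (A <= B)%VS, A != B &
      forall C, subalg C -> (A <= C)%VS -> (C <= B)%VS -> C = A \/ C = B].

Definition upper_modular (U : {vspace vT}) : Prop :=
  forall B, subalg B -> covers B (U :&: B)%VS ->
  forall W, is_gen W U B -> covers W U.

Definition lower_modular (U : {vspace vT}) : Prop :=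
  forall B, subalg B ->
  forall W, is_gen W U B -> covers W U -> covers B (U :&: B)%VS.

Definition semi_modular (U : {vspace vT}) : Prop :=
  upper_modular U /\ lower_modular U.

Definition derived (S : {vspace vT}) (n : nat) : {vspace vT} :=
  iter n (fun D => brv D D) S.

Definition solvable_sub (S : {vspace vT}) : Prop :=
  exists n, derived S n = 0%VS.

Definition mu_algebra (S : {vspace vT}) : Prop :=
  ~ solvable_sub S /\
  forall C, subalg C -> (C <= S)%VS -> C != S -> C != 0%VS -> \dim C = 1%N.

Definition almost_abelian : Prop :=
  let L2 := brv fullv fullv in
  exists x : vT,
    [/\ (L2 + <[x]> = fullv)%VS, (L2 :&: <[x]> = 0)%VS,
        (forall y z, y \in L2 -> z \in L2 -> br y z = 0) &
        (forall y, y \in L2 -> br x y = y)].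

End Lie.

(* The algebra K on F^3 with basis a = e0, b = e1, c = e2 and
   [a,b] = c, [b,c] = b, [a,c] = a. *)
Definition Kbr (F : fieldType) (v w : 'rV[F]_3) : 'rV[F]_3 :=
  \row_(i < 3)
    (if val i == 0%N then v 0 0 * w 0 2 - v 0 2 * w 0 0
     else if val i == 1%N then v 0 1 * w 0 2 - v 0 2 * w 0 1
     else v 0 0 * w 0 1 - v 0 1 * w 0 0).

Definition Ka (F : fieldType) : 'rV[F]_3 := \row_(i < 3) (if val i == 0%N then 1 else 0).
Definition Kb (F : fieldType) : 'rV[F]_3 := \row_(i < 3) (if val i == 1%N then 1 else 0).
Definition Kc (F : fieldType) : 'rV[F]_3 := \row_(i < 3) (if val i == 2%N then 1 else 0).

(* Main.v *)
Require Import Defs.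
From HB Require Import structures.
From mathcomp Require Import all_boot all_order all_algebra.
From Stdlib Require Import Classical.
Import GRing.Theory.
Local Open Scope ring_scope.

Module Helpers.
Set Implicit Arguments. Unset Strict Implicit. Unset Printing Implicit Defensive.

Section Basic.
Variables (F : fieldType) (vT : vectType F) (br : vT -> vT -> vT).
Hypothesis Hlie : lie_bracket br.

Lemma brL a x y z : br (a *: x + y) z = a *: br x z + br y z.
Proof. by case: Hlie. Qed.
Lemma brR a x y z : br x (a *: y + z) = a *: br x y + br x z.
Proof. by case: Hlie. Qed.
Lemma brxx x : br x x = 0.
Proof. by case: Hlie. Qed.
Lemma jacobi x y z : br x (br y z) + br y (br z x) + br z (br x y) = 0.
Proof. by case: Hlie. Qed.

Lemma br0l z : br 0 z = 0.
Proof.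
have := brL 1 0 0 z; rewrite !scale1r addr0 => H.
by apply: (@addrI _ (br 0 z)); rewrite addr0 -H.
Qed.
Lemma br0r z : br z 0 = 0.
Proof.
have := brR 1 z 0 0; rewrite !scale1r addr0 => H.
by apply: (@addrI _ (br z 0)); rewrite addr0 -H.
Qed.
Lemma brDl x y z : br (x + y) z = br x z + br y z.
Proof. by have := brL 1 x y z; rewrite !scale1r. Qed.
Lemma brDr x y z : br z (x + y) = br z x + br z y.
Proof. by have := brR 1 z x y; rewrite !scale1r. Qed.
Lemma brZl a x z : br (a *: x) z = a *: br x z.
Proof. by have := brL a x 0 z; rewrite !addr0 br0l addr0. Qed.
Lemma brZr a x z : br z (a *: x) = a *: br z x.
Proof. by have := brR a z x 0; rewrite !addr0 br0r addr0. Qed.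
Lemma brNl x z : br (- x) z = - br x z.
Proof. by rewrite -scaleN1r brZl scaleN1r. Qed.
Lemma brNr x z : br z (- x) = - br z x.
Proof. by rewrite -scaleN1r brZr scaleN1r. Qed.
Lemma brBl x y z : br (x - y) z = br x z - br y z.
Proof. by rewrite brDl brNl. Qed.
Lemma brBr x y z : br z (x - y) = br z x - br z y.
Proof. by rewrite brDr brNr. Qed.
Lemma brC x y : br x y = - br y x.
Proof.
have := brxx (x + y); rewrite brDl !brDr !brxx add0r addr0 => /eqP.
by rewrite addr_eq0 => /eqP.
Qed.

Lemma span_closed (Q : vT -> Prop) (X : seq vT) :
  Q 0 -> (forall a x y, Q x -> Q y -> Q (a *: x + y)) ->
  (forall x, x \in X -> Q x) -> forall v, v \in <<X>>%VS -> Q v.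
Proof.
move=> Q0 QL QX v; rewrite -[X]/(tval (in_tuple X)) => /coord_span ->.
elim/big_rec: _ => // i w _ Qw; apply: QL => //; apply: QX; exact: mem_nth.
Qed.

Lemma mem_brv (A B : {vspace vT}) x y : x \in A -> y \in B -> br x y \in brv br A B.
Proof.
move=> xA yB.
pose Q1 := fun x' => forall y', y' \in vbasis B -> br x' y' \in brv br A B.
have : Q1 x.
  move: xA; rewrite -{1}(span_basis (vbasisP A)); apply: span_closed.
  - by move=> y' _; rewrite br0l mem0v.
  - by move=> a x1 x2 H1 H2 y' Hy; rewrite brL memvD ?memvZ ?H1 ?H2.
  - by move=> x' Hx' y' Hy'; apply: memv_span; apply: allpairs_f.
move=> Hx; move: yB; rewrite -{1}(span_basis (vbasisP B)).
pose Q2 := fun y' => br x y' \in brv br A B.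
apply: (@span_closed Q2).
- by rewrite /Q2 br0r mem0v.
- by move=> a x1 x2 H1 H2; rewrite /Q2 brR memvD ?memvZ.
- by move=> y' Hy'; apply: Hx.
Qed.

Lemma brv_sub (A B S : {vspace vT}) :
  (forall x y, x \in A -> y \in B -> br x y \in S) -> (brv br A B <= S)%VS.
Proof.
move=> H; apply/span_subvP => w /allpairsP [[x y] [/= Hx Hy ->]].
by apply: H; apply: vbasis_mem.
Qed.

End Basic.

Section Sub.
Variables (F : fieldType) (vT : vectType F) (br : vT -> vT -> vT).
Hypothesis Hlie : lie_bracket br.

Lemma subalg0 : subalg br 0%VS.
Proof. by move=> x y; rewrite !memv0 => /eqP -> _; rewrite br0l // mem0v. Qed.

Lemma subalg_line x : subalg br <[x]>%VS.
Proof.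
move=> y z /vlineP [k ->] /vlineP [m ->].
by rewrite brZl // brZr // brxx // !scaler0 mem0v.
Qed.

Lemma subalg_cap S T : subalg br S -> subalg br T -> subalg br (S :&: T)%VS.
Proof.
move=> HS HT x y /memv_capP [xS xT] /memv_capP [yS yT].
by apply/memv_capP; split; [apply: HS | apply: HT].
Qed.

Lemma subalgf : subalg br fullv.
Proof. by move=> x y _ _; rewrite memvf. Qed.

Lemma exists_gen U B : exists W, is_gen br W U B.
Proof.
suff H : forall n S, subalg br S -> (U + B <= S)%VS -> (\dim S <= n)%N ->
   exists W, is_gen br W U B.
  by apply: (H _ fullv subalgf (subvf _) (leqnn _)).
elim=> [|n IH] S HS HUB Hd.
  exists S; split=> // T _ _.
  by move: Hd; rewrite leqn0 dimv_eq0 => /eqP ->; rewrite sub0v.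
case: (classic (forall T, subalg br T -> (U + B <= T)%VS -> (S <= T)%VS)) => Hc.
  by exists S; split.
have [T [HT1 [HT2 HT3]]] : exists T, subalg br T /\ (U + B <= T)%VS /\ ~~ (S <= T)%VS.
  apply: NNPP => Hn; apply: Hc => T H1 H2; apply: NNPP => H3; apply: Hn.
  by exists T; split=> //; split=> //; apply/negP.
apply: (IH (S :&: T)%VS); first exact: subalg_cap.
  by rewrite subv_cap HUB.
have Hsub : (S :&: T <= S)%VS by apply: capvSl.
have := dimv_leqif_eq Hsub => Hle.
have Hne : (S :&: T)%VS != S.
  apply/negP => /eqP E; move: HT3; by rewrite -E capvSr.
rewrite -ltnS; apply: leq_trans Hd; by rewrite (ltn_leqif Hle).
Qed.

Lemma gen_sub W U B S : is_gen br W U B -> subalg br S -> (U <= S)%VS -> (B <= S)%VS ->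
  (W <= S)%VS.
Proof. by case=> _ _ H HS HU HB; apply: H => //; rewrite subv_add HU HB. Qed.

Lemma gen_U W U B : is_gen br W U B -> (U <= W)%VS.
Proof. by case=> _ H _; apply: subv_trans H; apply: addvSl. Qed.
Lemma gen_B W U B : is_gen br W U B -> (B <= W)%VS.
Proof. by case=> _ H _; apply: subv_trans H; apply: addvSr. Qed.

Lemma covers0_dim1 C : covers br C 0%VS -> \dim C = 1%N.
Proof.
case=> _ HC _ Hne Hmax.
have Hc : vpick C != 0 by rewrite vpick0 eq_sym.
have Hs : (<[vpick C]> <= C)%VS by rewrite -memvE memv_pick.
have [E|E] := Hmax <[vpick C]>%VS (@subalg_line (vpick C)) (sub0v _) Hs.
- by move: (congr1 (@dimv _ _) E); rewrite dim_vline Hc dimv0.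
- by rewrite -E dim_vline Hc.
Qed.

Lemma line_covers0 x : x != 0 -> covers br <[x]>%VS 0%VS.
Proof.
move=> Hx; split; [exact: subalg0 | exact: (@subalg_line x) | exact: sub0v | |].
  by rewrite eq_sym -dimv_eq0 dim_vline Hx.
move=> C _ _ HC.
have := dimvS HC; rewrite dim_vline Hx leq_eqVlt ltnS leqn0 dimv_eq0.
case/orP=> [/eqP Hd|/eqP ->]; last by left.
right; apply/eqP; by rewrite eqEdim HC dim_vline Hx Hd.
Qed.

Lemma cap_line0 (u x : vT) : x \notin <[u]>%VS -> (<[u]> :&: <[x]> = 0)%VS.
Proof.
move=> Hx; apply/eqP; rewrite -subv0; apply/subvP => w /memv_capP [Hu /vlineP [k Ek]].
rewrite memv0; apply/negPn/negP => Hw; move: Hx; rewrite Ek in Hu Hw.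
have Hk : k != 0 by apply: contraNneq Hw => ->; rewrite scale0r.
by rewrite -(scalerK Hk x) memvZ.
Qed.

Lemma um_line u x : upper_modular br <[u]>%VS -> x \notin <[u]>%VS ->
  forall W, is_gen br W <[u]>%VS <[x]>%VS -> covers br W <[u]>%VS.
Proof.
move=> Hum Hx; apply: Hum; first exact: (@subalg_line x).
rewrite cap_line0 //; apply: line_covers0.
by apply: contraNneq Hx => ->; rewrite mem0v.
Qed.

Lemma lm_sub u B : lower_modular br <[u]>%VS -> subalg br B -> u \notin B ->
  (2 <= \dim B)%N -> forall W, is_gen br W <[u]>%VS B -> ~ covers br W <[u]>%VS.
Proof.
move=> Hlm HB Hu Hd W HW Hc.
have := Hlm B HB W HW Hc.
have -> : (<[u]> :&: B = 0)%VS.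
  apply/eqP; rewrite -subv0; apply/subvP => w /memv_capP [/vlineP [k ->] Hw].
  rewrite memv0; apply/negPn/negP => Hk; move: Hu.
  have Hk' : k != 0 by apply: contraNneq Hk => ->; rewrite scale0r.
  by rewrite -(scalerK Hk' u) memvZ.
by move/covers0_dim1 => E; move: Hd; rewrite E.
Qed.

End Sub.

Section Case2.
Variables (F : fieldType) (vT : vectType F) (br : vT -> vT -> vT).
Hypothesis Hlie : lie_bracket br.

Lemma span2P (u z w : vT) :
  reflect (exists a b, w = a *: u + b *: z) (w \in (<[u]> + <[z]>)%VS).
Proof.
apply: (iffP memv_addP) => [[p /vlineP [a ->] [q /vlineP [b ->] ->]]|[a [b ->]]].
  by exists a, b.
exists (a *: u); first by rewrite memvZ ?memv_line.
by exists (b *: z); first by rewrite memvZ ?memv_line.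
Qed.

Lemma subalg_span2 (u y : vT) : br u y \in (<[u]> + <[y]>)%VS ->
  subalg br (<[u]> + <[y]>)%VS.
Proof.
move=> H x x' /span2P [a [b ->]] /span2P [c [d ->]].
have Hyu : br y u \in (<[u]> + <[y]>)%VS by rewrite (brC Hlie) memvN.
rewrite !(brDl Hlie) !(brZl Hlie) !(brDr Hlie) !(brZr Hlie) !(brxx Hlie).
by rewrite !scaler0 add0r addr0 memvD ?memvZ.
Qed.

Lemma dim_span2 (u y : vT) : u != 0 -> y \notin <[u]>%VS ->
  \dim (<[u]> + <[y]>)%VS = 2%N.
Proof.
move=> Hu Hy; rewrite dimv_disjoint_sum ?cap_line0 // !dim_vline Hu.
by have -> : y != 0 by apply: contraNneq Hy => ->; rewrite mem0v.
Qed.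

Lemma notin_line_scale (u x : vT) k : k != 0 -> x \notin <[u]>%VS -> k *: x \notin <[u]>%VS.
Proof. by move=> Hk; apply: contra; rewrite -{2}(scalerK Hk x); apply: memvZ. Qed.

Definition good u z := br u z \in (<[u]> + <[z]>)%VS.

Lemma good_line u x : x \in <[u]>%VS -> good u x.
Proof. by move=> /vlineP [k ->]; rewrite /good (brZr Hlie) (brxx Hlie) scaler0 mem0v. Qed.

Lemma stepA u x y : u != 0 -> upper_modular br <[u]>%VS -> ~ good u x ->
  y \notin <[u]>%VS -> good u y -> False.
Proof.
move=> Hu Hum Hx Hy Py.
have Hxu : x \notin <[u]>%VS by apply/negP => /(good_line) H; apply: Hx.
pose z := x + y.
have Hz : z \notin <[u]>%VS.
  apply/negP => /vlineP [k Ez]; apply: Hx.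
  have Ex : x = k *: u - y by rewrite -Ez /z addrK.
  have Hsub : (<[u]> + <[y]> <= <[u]> + <[x]>)%VS.
    rewrite subv_add addvSl /= -memvE.
    have -> : y = k *: u - x by rewrite Ex opprB addrC addrNK.
    apply: memvB; [apply: memvZ; apply: (subvP (addvSl _ _)) | apply: (subvP (addvSr _ _))]; exact: memv_line.
  rewrite /good Ex (brBr Hlie) (brZr Hlie) (brxx Hlie) scaler0 sub0r memvN -Ex.
  exact: (subvP Hsub).
have [Wz HWz] := exists_gen br <[u]>%VS <[z]>%VS.
have [Wx HWx] := exists_gen br <[u]>%VS <[x]>%VS.
have [_ HWzs _ _ Hmz] := um_line Hlie Hum Hz HWz.
have [_ HWxs _ _ Hmx] := um_line Hlie Hum Hxu HWx.
have uWz : u \in Wz by apply: (subvP (gen_U HWz)); apply: memv_line.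
have zWz : z \in Wz by apply: (subvP (gen_B HWz)); apply: memv_line.
have uWx : u \in Wx by apply: (subvP (gen_U HWx)); apply: memv_line.
have xWx : x \in Wx by apply: (subvP (gen_B HWx)); apply: memv_line.
move: (Py) => /span2P [al [be Ey]].
pose x1 := br u x - be *: x.
have x1Wz : x1 \in Wz.
  have : br u z - be *: z - al *: u \in Wz by rewrite !memvB ?memvZ ?HWzs.
  rewrite /z (brDr Hlie) Ey scalerDr /x1.
  suff -> : br u x + (al *: u + be *: y) - (be *: x + be *: y) - al *: u
     = br u x - be *: x by [].
  rewrite !opprD !addrA.
  set A := br u x; set B := al *: u; set C := be *: y; set D := be *: x.
  by rewrite (addrAC (A + B + C) (- D) (- C)) addrK (addrAC (A + B)) addrK.
have x1Wx : x1 \in Wx by rewrite memvB ?memvZ ?HWxs.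
have x1U : x1 \notin <[u]>%VS.
  apply/negP => /vlineP [k Ek]; apply: Hx; apply/span2P; exists k, be.
  by rewrite -Ek /x1 subrK.
have HC : subalg br (Wz :&: Wx)%VS by apply: subalg_cap.
have HC1 : (<[u]> <= Wz :&: Wx)%VS by rewrite subv_cap (gen_U HWz) (gen_U HWx).
have [EC|EC] := Hmx _ HC HC1 (capvSr _ _).
- by move: x1U; rewrite -EC memv_cap x1Wz x1Wx.
have xWz : x \in Wz by move: xWx; rewrite -EC memv_cap => /andP [].
have yWz : y \in Wz by have := memvB zWz xWz; rewrite /z addrC addKr.
have HD := subalg_span2 Py.
have HD1 : (<[u]> + <[y]> <= Wz)%VS by rewrite subv_add (gen_U HWz) -memvE.
have [ED|ED] := Hmz _ HD (addvSl _ _) HD1.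
- have : y \in (<[u]> + <[y]>)%VS by apply: (subvP (addvSr _ _)); apply: memv_line.
  by rewrite ED (negbTE Hy).
have xD : x \in (<[u]> + <[y]>)%VS by rewrite ED.
have Hs : (<[u]> + <[x]> <= <[u]> + <[y]>)%VS by rewrite subv_add addvSl -memvE.
have : (<[u]> + <[x]>)%VS == (<[u]> + <[y]>)%VS by rewrite eqEdim Hs !dim_span2.
move/eqP=> E; apply: Hx; rewrite /good E; apply: HD => //.
by apply: (subvP (addvSl _ _)); apply: memv_line.
Qed.


Lemma derived_const W n : brv br W W = W -> derived br W n = W.
Proof. by move=> E; elim: n => //= n IH; rewrite IH. Qed.

Lemma stepB u y W : u != 0 -> semi_modular br <[u]>%VS ->
  y \notin <[u]>%VS -> ~ good u y -> is_gen br W <[u]>%VS <[y]>%VS -> mu_algebra br W.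
Proof.
move=> Hu [Hum Hlm] Hy Py HW.
have Hcov := um_line Hlie Hum Hy HW.
have [_ HWs _ HWne Hm] := Hcov.
have uW : u \in W by apply: (subvP (gen_U HW)); apply: memv_line.
have yW : y \in W by apply: (subvP (gen_B HW)); apply: memv_line.
have D2W : (<[u]> + <[y]> <= W)%VS by rewrite subv_add -!memvE uW yW.
have dW : (3 <= \dim W)%N.
  rewrite ltnNge; apply/negP => Hd; apply: Py.
  have : (<[u]> + <[y]>)%VS == W by rewrite eqEdim D2W dim_span2.
  by move/eqP=> E; rewrite /good E; apply: HWs.
have Hprop : forall C, subalg br C -> (C <= W)%VS -> C != W -> C != 0%VS -> \dim C = 1%N.
  move=> C HC CW Cne C0.
  case: (eqVneq (\dim C) 1%N) => // Hd1.
  have Hd2 : (2 <= \dim C)%N.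
    by move: Hd1 C0; rewrite -dimv_eq0; case: (\dim C) => [|[|n]].
  exfalso.
  case: (boolP (u \in C)) => uC.
    have [E|E] := Hm C HC (uC : (<[u]> <= C)%VS) CW.
      by move: Hd2; rewrite E dim_vline Hu.
    by move: Cne; rewrite E eqxx.
  have [W' HW'] := exists_gen br <[u]>%VS C.
  have Hnc := lm_sub Hlie Hlm HC uC Hd2 HW'.
  have W'W : (W' <= W)%VS by apply: (gen_sub HW') => //; rewrite -memvE.
  have [HW's _ _] := HW'.
  have [E|E] := Hm W' HW's (gen_U HW') W'W.
    have CU : (C <= <[u]>)%VS by rewrite -E (gen_B HW').
    by have := leq_trans Hd2 (dimvS CU); rewrite dim_vline Hu.
  by apply: Hnc; rewrite E.
split; last by [].
move=> [n Hn].
have MW : (brv br W W <= W)%VS by apply: brv_sub => x z xW zW; apply: HWs.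
have W0 : W != 0%VS by apply: contraTneq uW => ->; rewrite memv0.
have Mne : brv br W W != W.
  by apply: contraNneq W0 => E; rewrite -Hn derived_const.
have Msub : forall V, (brv br W W <= V)%VS -> (V <= W)%VS -> subalg br V.
  move=> V H1 H2 x z xV zV; apply: (subvP H1); apply: mem_brv => //.
  - exact: (subvP H2).
  - exact: (subvP H2).
have D2ne : (<[u]> + <[y]>)%VS != W.
  by apply: contraTneq dW => <-; rewrite dim_span2.
have D20 : (<[u]> + <[y]>)%VS != 0%VS by rewrite -dimv_eq0 dim_span2.
case: (eqVneq (brv br W W) 0%VS) => M0.
  have HD2s : subalg br (<[u]> + <[y]>)%VS by apply: Msub => //; rewrite M0 sub0v.
  by have := Hprop _ HD2s D2W D2ne D20; rewrite dim_span2.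
have dM : \dim (brv br W W) = 1%N by apply: Hprop => //; apply: Msub.
have : ~~ (W <= brv br W W)%VS.
  by apply: contra Mne => H; rewrite eqEsubv MW H.
case/subvPn => w wW wM.
have VW : (brv br W W + <[w]> <= W)%VS by rewrite subv_add MW -memvE.
have dV : (\dim (brv br W W + <[w]>) <= 2)%N.
  apply: leq_trans (dimv_add_leqif _ _).1 _.
  by rewrite dM dim_vline; case: (w != 0).
have MV : (brv br W W <= brv br W W + <[w]>)%VS by apply: addvSl.
have Vne : (brv br W W + <[w]>)%VS != W.
  by apply: contraTneq dW => <-; rewrite -ltnNge ltnS.
have V0 : (brv br W W + <[w]>)%VS != 0%VS.
  by apply: contraNneq M0 => E; rewrite -subv0 -E.
have dV1 := Hprop _ (Msub _ MV VW) VW Vne V0.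
have : brv br W W == (brv br W W + <[w]>)%VS by rewrite eqEdim MV dV1 dM.
move/eqP=> E; move: wM; rewrite E; apply/negP/negPn.
by apply: (subvP (addvSr _ _)); apply: memv_line.
Qed.

End Case2.

Section Case1.
Variables (F : fieldType) (vT : vectType F) (br : vT -> vT -> vT).
Hypothesis Hlie : lie_bracket br.
Variable v : vT.
Hypothesis Hv : v != 0.
Hypothesis Had : forall z, br v z - z \in <[v]>%VS.

Let brDl := brDl Hlie. Let brDr := brDr Hlie. Let brZl := brZl Hlie.
Let brZr := brZr Hlie. Let brxx := brxx Hlie. Let brC := brC Hlie.
Let brBl := brBl Hlie. Let brBr := brBr Hlie. Let brNl := brNl Hlie.
Let brNr := brNr Hlie. Let br0l := br0l Hlie. Let br0r := br0r Hlie.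
Let brL := brL Hlie. Let brR := brR Hlie.

Definition isE e := br v e = e.

Lemma brv_line x : x \in <[v]>%VS -> br v x = 0.
Proof. by move=> /vlineP [k ->]; rewrite brZr brxx scaler0. Qed.

Lemma isE_ad z : isE (br v z).
Proof.
rewrite /isE; have := brv_line (Had z); rewrite brBr => /eqP.
by rewrite subr_eq0 => /eqP.
Qed.

Lemma isE0 : isE 0.
Proof. by rewrite /isE br0r. Qed.

Lemma isEL k x y : isE x -> isE y -> isE (k *: x + y).
Proof. by rewrite /isE brR => -> ->. Qed.

Lemma isEZ k x : isE x -> isE (k *: x).
Proof. by move=> H; have := isEL k H isE0; rewrite addr0. Qed.
Lemma isED x y : isE x -> isE y -> isE (x + y).
Proof. by move=> H1 H2; have := isEL 1 H1 H2; rewrite scale1r. Qed.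
Lemma isEN x : isE x -> isE (- x).
Proof. by move=> H; rewrite -scaleN1r; apply: isEZ. Qed.

Lemma isE_notline e : isE e -> e \in <[v]>%VS -> e = 0.
Proof. by move=> H /brv_line; rewrite H. Qed.

Lemma decomp z : z = br v z - (br v z - z).
Proof. by rewrite opprB addrC subrK. Qed.

Lemma brEE a b : isE a -> isE b -> br a b \in <[v]>%VS /\ br a b + br a b = 0.
Proof.
move=> Ha Hb.
have J := jacobi Hlie v a b.
have E1 : br a (br b v) = - br a b by rewrite (brC b v) Hb brNr.
have E2 : br b (br v a) = - br a b by rewrite Ha (brC b a).
move: J; rewrite E1 E2 -addrA -opprD => /eqP; rewrite subr_eq0 => /eqP E.
have Hm : br a b \in <[v]>%VS.
  have := Had (br a b); rewrite E.
  suff -> : br a b + br a b - br a b = br a b by [].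
  by rewrite addrK.
split=> //; by rewrite -E brv_line.
Qed.

Lemma caseA : (forall a b, isE a -> isE b -> br a b = 0) -> almost_abelian br.
Proof.
move=> Hab.
have Hbr : forall x y, isE (br x y).
  move=> x y; rewrite (decomp x) (decomp y).
  have [dx Edx] := vlineP _ _ (Had x); have [dy Edy] := vlineP _ _ (Had y).
  rewrite Edx Edy !brBl !brBr (Hab _ _ (isE_ad x) (isE_ad y)).
  rewrite !brZl !brZr brxx !scaler0 subr0 sub0r.
  apply: isED; apply: isEN; apply: isEZ; [rewrite brC; apply: isEN|]; apply: isE_ad.
have Hspan : forall w, w \in brv br fullv fullv -> isE w.
  move=> w; apply: span_closed; [exact: isE0 | exact: isEL |].
  by move=> z /allpairsP [[x y] [_ _ ->]]; apply: Hbr.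
exists v; split.
- apply/eqP; rewrite eqEsubv subvf /=; apply/subvP => z _.
  rewrite (decomp z); apply: memvB; first by apply: (subvP (addvSl _ _)); exact: (mem_brv Hlie (memvf _) (memvf _)).
  by apply: (subvP (addvSr _ _)); apply: Had.
- apply/eqP; rewrite -subv0; apply/subvP => w /memv_capP [H1 H2].
  by rewrite memv0; apply/eqP; apply: isE_notline => //; apply: Hspan.
- by move=> y z Hy Hz; apply: Hab; apply: Hspan.
- by move=> y Hy; apply: Hspan.
Qed.



Lemma neg_char2 (w : vT) : 2 \in [pchar F] -> - w = w.
Proof.
move=> H; apply/eqP; rewrite eq_sym -subr_eq0 opprK.
by rewrite -[w]scale1r -scalerDl -[1 + 1]/(2%:R) (pcharf0 H) scale0r.
Qed.

End Case1.

Section CaseB.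
Variables (F : fieldType) (vT : vectType F) (br : vT -> vT -> vT).
Hypothesis Hlie : lie_bracket br.
Hypothesis pc2 : 2 \in [pchar F].
Variables A B V : vT.
Hypothesis HV : V != 0.
Hypothesis HB : B != 0.
Hypothesis HAB : br A B = V.
Hypothesis HVA : br V A = A.
Hypothesis HVB : br V B = B.
Hypothesis Hspan : forall z, exists p q t, z = p *: A + q *: B + t *: V.

Let brDl := brDl Hlie. Let brDr := brDr Hlie. Let brZl := brZl Hlie.
Let brZr := brZr Hlie. Let br0r := br0r Hlie. Let br0l := br0l Hlie. Let brxx := brxx Hlie. Let brC := brC Hlie.

Lemma HAV : br A V = A.
Proof. by rewrite brC HVA neg_char2. Qed.
Lemma HBA : br B A = V.
Proof. by rewrite brC HAB neg_char2. Qed.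
Lemma HBV : br B V = B.
Proof. by rewrite brC HVB neg_char2. Qed.

Definition g (r : 'rV[F]_3) := r 0 0 *: A + r 0 1 *: B + r 0 2 *: V.

Lemma g_lin k r s : g (k *: r + s) = k *: g r + g s.
Proof.
rewrite /g !mxE !scalerDl !scalerDr !scalerA.
by rewrite (AC (2*2*2) ((1*3*5)*(2*4*6))).
Qed.

Lemma g_br r s : g (Kbr r s) = br (g r) (g s).
Proof.
rewrite /g /Kbr !mxE /=.
rewrite !brDl !brZl !brDr !brZr !brxx HAB HVA HVB HAV HBA HBV.
rewrite !scaler0 !addr0 !add0r !(oppr_pchar2 pc2) !scalerDl !scalerDr !scalerA.
by rewrite [LHS](AC (2*2*2) ((5*1)*(6*3)*(2*4))).
Qed.


Lemma g0 r : g r = 0 -> r = 0.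
Proof.
move=> H.
have H1 : br V (g r) = r 0 0 *: A + r 0 1 *: B.
  by rewrite /g !brDr !brZr HVA HVB brxx scaler0 addr0.
have H2 : r 0 2 = 0.
  have : g r - br V (g r) = r 0 2 *: V by rewrite H1 /g addrC addKr.
  rewrite H br0r subr0 => /esym/eqP; rewrite scaler_eq0 (negbTE HV) orbF.
  by move/eqP.
have H3 : r 0 0 = 0.
  have : br (g r) B = r 0 0 *: V.
    by rewrite /g H2 scale0r addr0 !brDl !brZl HAB brxx scaler0 addr0.
  rewrite H br0l => /esym/eqP.
  by rewrite scaler_eq0 (negbTE HV) orbF => /eqP.
have H4 : r 0 1 = 0.
  move: H; rewrite /g H2 H3 !scale0r addr0 add0r => /eqP.
  by rewrite scaler_eq0 (negbTE HB) orbF => /eqP.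
apply/rowP => i; rewrite mxE.
case: i => [[|[|[|n]]] Hi].
- by have -> : Ordinal Hi = 0 by apply: val_inj.
- by have -> : Ordinal Hi = 1 by apply: val_inj.
- by have -> : Ordinal Hi = 2%R by apply: val_inj.
- by [].
Qed.

Lemma g_inj r s : g r = g s -> r = s.
Proof.
move=> E; have := g_lin (-1) s r; rewrite E !scaleN1r addNr => /g0 /eqP.
by rewrite addrC subr_eq0 => /eqP.
Qed.

Definition mk3 (p q t : F) : 'rV[F]_3 := \row_(i < 3) [:: p; q; t]`_i.

Lemma g_mk3 p q t : g (mk3 p q t) = p *: A + q *: B + t *: V.
Proof. by rewrite /g !mxE. Qed.

Lemma g_surj z : exists r, g r == z.
Proof. by have [p [q [t ->]]] := Hspan z; exists (mk3 p q t); rewrite g_mk3. Qed.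

Definition ginv z := xchoose (g_surj z).
Lemma ginvK z : g (ginv z) = z.
Proof. exact/eqP/(xchooseP (g_surj z)). Qed.
Lemma gK r : ginv (g r) = r.
Proof. by apply: g_inj; rewrite ginvK. Qed.

Lemma gKc : g (Kc F) = V.
Proof. by rewrite /g /Kc !mxE /= !scale0r !add0r scale1r. Qed.

Lemma gzero : g 0 = 0.
Proof. by rewrite /g !mxE !scale0r !addr0. Qed.
Lemma gZ k r : g (k *: r) = k *: g r.
Proof. by rewrite -[k *: r]addr0 g_lin gzero addr0. Qed.

Lemma caseB_final : exists f : vT -> 'rV[F]_3,
  [/\ (forall (a : F) (x y : vT), f (a *: x + y) = a *: f x + f y),
      bijective f,
      (forall x y : vT, f (br x y) = Kbr (f x) (f y)) &
      (forall z, z \in <[Kc F]>%VS <-> exists2 x, x \in <[V]>%VS & f x = z)].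
Proof.
exists ginv; split.
- by move=> a x y; apply: g_inj; rewrite g_lin !ginvK.
- by exists g; [exact: ginvK | exact: gK].
- by move=> x y; apply: g_inj; rewrite g_br !ginvK.
move=> z; split.
  move=> /vlineP [k ->]; exists (k *: V); first by rewrite memvZ ?memv_line.
  by apply: g_inj; rewrite ginvK gZ gKc.
case=> x /vlineP [k ->] <-; apply/vlineP; exists k.
by apply: g_inj; rewrite ginvK gZ gKc.
Qed.

End CaseB.

Section Eig.
Variables (F : fieldType) (vT : vectType F) (br : vT -> vT -> vT).
Hypothesis Hlie : lie_bracket br.
Variable u : vT.
Hypothesis Hall : forall z, good br u z.
Let brDr := brDr Hlie. Let brZr := brZr Hlie. Let brxx := brxx Hlie.
Let U := <[u]>%VS.

Lemma scal_notline k z : k *: z \in U -> z \notin U -> k = 0.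
Proof.
move=> H1 H2; apply/eqP; apply/negPn/negP => Hk.
by move: (notin_line_scale Hk H2); rewrite H1.
Qed.

Lemma Tline z : z \in U -> br u z = 0.
Proof. by move=> /vlineP [m ->]; rewrite brZr brxx scaler0. Qed.

Lemma goodE z : exists t, br u z - t *: z \in U.
Proof.
have /span2P [s [t E]] := Hall z; exists t.
by rewrite E addrK memvZ ?memv_line.
Qed.

Lemma eig x0 lam : x0 \notin U -> br u x0 - lam *: x0 \in U ->
  forall z, br u z - lam *: z \in U.
Proof.
move=> Hx0 m2 z.
case: (boolP (z \in U)) => Hz.
  by rewrite Tline // sub0r memvN memvZ.
have [t m1] := goodE z.
have [t' m3] := goodE (z + x0).
have K1 : (t - t') *: z + (lam - t') *: x0 \in U.
  have : (br u z - t *: z) + (br u x0 - lam *: x0) - (br u (z + x0) - t' *: (z + x0)) \in U.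
    by apply: memvB => //; apply: memvD.
  suff -> : (br u z - t *: z) + (br u x0 - lam *: x0) - (br u (z + x0) - t' *: (z + x0))
      = - ((t - t') *: z + (lam - t') *: x0) by rewrite memvN.
  rewrite brDr !scalerBl scalerDr !opprD !opprK.
  by rewrite [LHS](@GRing.add vT).[AC ((2*2)*(2*2)) (((1*5)*(3*6))*((2*7)*(4*8)))] !addrN !add0r.
have Htl : t = lam.
  case: (eqVneq t' lam) => Et.
    move: K1; rewrite Et subrr scale0r addr0 => K1.
    by apply/eqP; rewrite -subr_eq0; apply/eqP; apply: (scal_notline K1 Hz).
  have Hc : lam - t' != 0 by rewrite subr_eq0 eq_sym.
  pose k := (lam - t')^-1 * (t - t').
  have md : k *: z + x0 \in U.
    have := memvZ ((lam - t')^-1) K1.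
    by rewrite scalerDr !scalerA mulVf // scale1r.
  have Hk : k != 0.
    apply: contraNneq Hx0 => Ek; move: md; by rewrite Ek scale0r add0r.
  have TZ : k *: br u z + br u x0 = 0.
    by have := Tline md; rewrite brDr brZr.
  have : k *: (br u z - t *: z) + (br u x0 - lam *: x0) + lam *: (k *: z + x0)
      - (k *: br u z + br u x0) \in U.
    rewrite TZ subr0; apply: memvD; [apply: memvD; [apply: memvZ|]|apply: memvZ] => //.
  have -> : k *: (br u z - t *: z) + (br u x0 - lam *: x0) + lam *: (k *: z + x0)
      - (k *: br u z + br u x0) = - ((k * (t - lam)) *: z).
    rewrite !scalerDr ?scalerN !scalerA (mulrC lam k) mulrBr scalerBl !opprD !opprK.
    by rewrite [LHS](@GRing.add vT).[AC (((2*2)*2)*2) (((1*7)*(3*8))*((4*6)*(2*5)))] !addrN addNr !add0r.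
  rewrite memvN => H.
  have := scal_notline H Hz => /eqP; rewrite mulf_eq0 (negbTE Hk) /= subr_eq0.
  by move/eqP.
by rewrite -Htl.
Qed.

End Eig.

Section Case1G.
Variables (F : fieldType) (vT : vectType F) (br : vT -> vT -> vT).
Hypothesis Hlie : lie_bracket br.
Let brDl := brDl Hlie. Let brDr := brDr Hlie. Let brZl := brZl Hlie.
Let brZr := brZr Hlie. Let brxx := brxx Hlie. Let brC := brC Hlie.

Lemma case1 (u : vT) (Hu : u != 0) (Hall : forall z, good br u z)
  (Hni : ~ ideal br <[u]>%VS) :
  almost_abelian br
  \/ (2%N \in [pchar F] /\
      exists f : vT -> 'rV[F]_3,
        [/\ (forall (a : F) (x y : vT), f (a *: x + y) = a *: f x + f y),
            bijective f,
            (forall x y : vT, f (br x y) = Kbr (f x) (f y)) &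
            (forall z, z \in <[Kc F]>%VS <-> exists2 x, x \in <[u]>%VS & f x = z)]).
Proof.
have [x0 Hx0] : exists x0, br u x0 \notin <[u]>%VS.
  apply: NNPP => H; apply: Hni => x y /vlineP [k ->].
  rewrite brZr brC memvZ // memvN; apply/negPn/negP => Hn; apply: H; by exists x.
have /span2P [al [lam E0]] := Hall x0.
have Hx0' : x0 \notin <[u]>%VS.
  by apply: contra Hx0 => /(Tline Hlie) ->; rewrite mem0v.
have Hlam : lam != 0.
  by apply: contraNneq Hx0 => El; rewrite E0 El scale0r addr0 memvZ ?memv_line.
have m2 : br u x0 - lam *: x0 \in <[u]>%VS by rewrite E0 addrK memvZ ?memv_line.
have Heig := eig Hlie Hall Hx0' m2.
pose v := lam^-1 *: u.
have Hv : v != 0 by rewrite scaler_eq0 negb_or invr_eq0 Hlam.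
have Hvl : <[v]>%VS = <[u]>%VS.
  apply/eqP; rewrite eqEdim !dim_vline Hv Hu leqnn andbT -memvE memvZ ?memv_line //.
have Had : forall z, br v z - z \in <[v]>%VS.
  move=> z; rewrite Hvl.
  have -> : br v z - z = lam^-1 *: (br u z - lam *: z).
    by rewrite brZl scalerBr scalerA mulVf // scale1r.
  by rewrite memvZ.
clearbody v.
case: (classic (forall a b, isE br v a -> isE br v b -> br a b = 0)) => Hc.
  by left; apply: (caseA Hlie Had).
right.
have [a [b [Ha [Hb Hab]]]] : exists a b, isE br v a /\ isE br v b /\ br a b != 0.
  apply: NNPP => H; apply: Hc => a b Ha Hb; apply/eqP/negPn/negP => Hn; apply: H.
  by exists a, b.
have [Hm Hs] := brEE Hlie Had Ha Hb.
have pc2 : 2%N \in [pchar F].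
  rewrite inE /=; apply/eqP.
  move: Hs; rewrite -[br a b]scale1r -scalerDl => /eqP; rewrite scaler_eq0 (negbTE Hab) orbF.
  by move/eqP.
have [c Ec] := vlineP _ _ Hm.
have Hcn : c != 0 by apply: contraNneq Hab => Ec0; rewrite Ec Ec0 scale0r.
pose A := c^-1 *: a.
have HA : isE br v A := isEZ Hlie c^-1 Ha.
have HAB : br A b = v by rewrite brZl Ec scalerK.
have HB : b != 0 by apply: contraNneq Hab => ->; rewrite (br0r Hlie).
have Espan : forall z, isE br v z -> exists p q, z = p *: A + q *: b.
  move=> z Hz.
  have [Hm1 _] := brEE Hlie Had Hb Hz.
  have [Hm2 _] := brEE Hlie Had Hz HA.
  have [w1 E1] := vlineP _ _ Hm1; have [w2 E2] := vlineP _ _ Hm2.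
  have J := jacobi Hlie A b z.
  exists (- w1), (- w2).
  move: J; rewrite E1 E2 HAB !brZr (brC A v) (brC b v) (brC z v) HA Hb Hz.
  move/eqP; rewrite addr_eq0 opprK => /eqP <-.
  by rewrite !scalerN !scaleNr.
have Hspan : forall z, exists p q t, z = p *: A + q *: b + t *: v.
  move=> z; have [p [q Epq]] := Espan _ (isE_ad Hlie Had z).
  have [m Em] := vlineP _ _ (Had z).
  exists p, q, (- m).
  by rewrite {1}(decomp br v z) Em Epq scaleNr.
have [f [H1 H2 H3 H4]] := caseB_final Hlie pc2 Hv HB HAB HA Hb Hspan.
by split => //; exists f; split => //; rewrite -Hvl.
Qed.

End Case1G.

End Helpers.
Import Helpers.

Theorem lemma3p4 (F : fieldType) (vT : vectType F) (br : vT -> vT -> vT)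
  (Hlie : lie_bracket br) (u : vT) (hu : u != 0)
  (Hsm : semi_modular br <[u]>%VS) (Hni : ~ ideal br <[u]>%VS) :
  almost_abelian br
  \/ (forall x : vT, x \notin <[u]>%VS ->
        forall W, is_gen br W <[u]>%VS <[x]>%VS -> mu_algebra br W)
  \/ (2%N \in [pchar F] /\
      exists f : vT -> 'rV[F]_3,
        [/\ (forall (a : F) (x y : vT), f (a *: x + y) = a *: f x + f y),
            bijective f,
            (forall x y : vT, f (br x y) = Kbr (f x) (f y)) &
            (forall z, z \in <[Kc F]>%VS <-> exists2 x, x \in <[u]>%VS & f x = z)]).
Proof.
case: (classic (forall z, good br u z)) => Hall.
  by case: (case1 Hlie hu Hall Hni) => H; [left | right; right].
right; left.
have [x Hx] : exists x, ~ good br u x.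
  by apply: NNPP => H; apply: Hall => z; apply: NNPP => Hz; apply: H; exists z.
move=> y Hy W HW.
case: (classic (good br u y)) => Py.
  by exfalso; apply: (stepA Hlie hu Hsm.1 Hx Hy Py).
exact: (stepB Hlie hu Hsm Hy Py HW).
Qed.
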